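(* Let $P\subset\mathbb{R}^d$ with $|P|=n$, let $D=\operatorname{diam}P$, $r\in[n]$ and $\varepsilon>0$. Then there is a set $F\subset\mathbb{R}^d$ with $|F|\le r^r\varepsilon^{-r}$ such that for every $Y\subseteq P$ with $|Y|\ge\varepsilon n$, \[ \left(F+\frac{3.5D}{\sqrt r}B\right)\cap\operatorname{conv}Y\ne\emptyset. \]
   Context: $B$ denotes the closed Euclidean unit ball centred at the origin of $\mathbb{R}^d$, and $+$ is Minkowski sum, so $F+\rho B$ is the union of the closed balls of radius $\rho$ centred at points of $F$. *)

(* Defs.v *)
From HB Require Import structures.
From mathcomp Require Import all_boot all_order all_algebra.
From mathcomp Require Import reals.
Set Implicit Arguments. Unset Strict Implicit. Unset Printing Implicit Defensive.
Import Order.TTheory GRing.Theory Num.Theory.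
Local Open Scope ring_scope.

Definition enorm (R : realType) (d : nat) (x : 'rV[R]_d) : R :=
  Num.sqrt (\sum_(i < d) x ord0 i ^+ 2).

Definition edist (R : realType) (d : nat) (x y : 'rV[R]_d) : R := enorm (x - y).

Definition diam (R : realType) (d : nat) (P : seq 'rV[R]_d) : R :=
  \big[Num.max/0]_(p <- P) \big[Num.max/0]_(q <- P) edist p q.

Definition in_conv (R : realType) (d : nat) (Y : seq 'rV[R]_d) (x : 'rV[R]_d) : Prop :=
  exists w : nat -> R,
    (forall i, 0 <= w i) /\ \sum_(i < size Y) w i = 1 /\
    x = \sum_(i < size Y) w i *: Y`_i.

(* (F + rho B) meets conv Y *)
Definition meets_conv (R : realType) (d : nat) (F : seq 'rV[R]_d) (rho : R)
    (Y : seq 'rV[R]_d) : Prop :=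
  exists f, exists y, f \in F /\ in_conv Y y /\ edist f y <= rho.

(* Main.v *)
Require Import Defs.
From HB Require Import structures.
From mathcomp Require Import all_boot all_order all_algebra.
From mathcomp Require Import reals.
From mathcomp Require Import ring lra.
From Stdlib Require Import Classical.
Set Implicit Arguments. Unset Strict Implicit. Unset Printing Implicit Defensive.
Import Order.TTheory GRing.Theory Num.Theory.
Local Open Scope ring_scope.

Definition nsq (R : realType) (d : nat) (u : 'rV[R]_d) : R :=
  \sum_(i < d) u ord0 i ^+ 2.
Definition dot (R : realType) (d : nat) (u v : 'rV[R]_d) : R :=
  \sum_(i < d) u ord0 i * v ord0 i.

Lemma nsqD (R : realType) (d : nat) (u v : 'rV[R]_d) :
  nsq (u + v) = nsq u + 2 * dot u v + nsq v.
Proof.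
rewrite /nsq /dot mulr_sumr -!big_split /=; apply: eq_bigr => i _.
rewrite !mxE; ring.
Qed.

Lemma nsq_ge0 (R : realType) (d : nat) (u : 'rV[R]_d) : 0 <= nsq u.
Proof. by apply: sumr_ge0 => i _; rewrite sqr_ge0. Qed.

Lemma nsqN (R : realType) (d : nat) (u : 'rV[R]_d) : nsq (- u) = nsq u.
Proof. by apply: eq_bigr => i _; rewrite !mxE sqrrN. Qed.

Lemma nsqZ (R : realType) (d : nat) (a : R) (u : 'rV[R]_d) :
  nsq (a *: u) = a ^+ 2 * nsq u.
Proof.
rewrite /nsq mulr_sumr; apply: eq_bigr => i _; rewrite !mxE; ring.
Qed.

Lemma nsq_par (R : realType) (d : nat) (u v : 'rV[R]_d) :
  nsq (u + v) <= 2 * nsq u + 2 * nsq v.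
Proof.
rewrite /nsq !mulr_sumr -big_split /=; apply: ler_sum => i _.
rewrite !mxE; have := sqr_ge0 (u ord0 i - v ord0 i).
by rewrite -subr_ge0 => H; rewrite -subr_ge0; apply: le_trans H _; rewrite le_eqVlt; apply/orP; left; apply/eqP; ring.
Qed.

Lemma dot0r (R : realType) (d : nat) (a : 'rV[R]_d) : dot a 0 = 0.
Proof. by apply: big1 => i _; rewrite mxE mulr0. Qed.

Lemma dotDr (R : realType) (d : nat) (a u v : 'rV[R]_d) :
  dot a (u + v) = dot a u + dot a v.
Proof.
rewrite /dot -big_split /=; apply: eq_bigr => i _; rewrite mxE; ring.
Qed.

Lemma dot_sumr (R : realType) (d : nat) (I : Type) (s : seq I) (a : 'rV[R]_d)
  (f : I -> 'rV[R]_d) :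
  dot a (\sum_(y <- s) f y) = \sum_(y <- s) dot a (f y).
Proof.
elim: s => [|x s IH]; first by rewrite !big_nil dot0r.
by rewrite !big_cons dotDr IH.
Qed.

Lemma sum_const_seq (R : realType) (I : Type) (s : seq I) (a : R) :
  \sum_(y <- s) a = (size s)%:R * a.
Proof.
elim: s => [|x s IH]; first by rewrite big_nil mul0r.
by rewrite big_cons IH /= -addn1 natrD; ring.
Qed.

Lemma sum_const_seqv (R : realType) (d : nat) (I : Type) (s : seq I) (a : 'rV[R]_d) :
  \sum_(y <- s) a = (size s)%:R *: a.
Proof.
elim: s => [|x s IH]; first by rewrite big_nil scale0r.
by rewrite big_cons IH /= [in RHS]mulrSr scalerDl scale1r addrC.
Qed.

Definition cen (R : realType) (d : nat) (Y : seq 'rV[R]_d) : 'rV[R]_d :=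
  (size Y)%:R^-1 *: \sum_(y <- Y) y.

Lemma sum_dev (R : realType) (d : nat) (Y : seq 'rV[R]_d) :
  (0 < size Y)%N -> \sum_(y <- Y) (y - cen Y) = 0.
Proof.
move=> Hm; rewrite big_split /= sumrN sum_const_seqv /cen scalerA divff ?scale1r ?subrr //.
by rewrite pnatr_eq0 -lt0n.
Qed.

Definition var (R : realType) (d : nat) (Y : seq 'rV[R]_d) : R :=
  \sum_(y <- Y) nsq (y - cen Y).

Lemma offset (R : realType) (d : nat) (Y : seq 'rV[R]_d) (a : 'rV[R]_d) :
  (0 < size Y)%N ->
  \sum_(y <- Y) nsq (a + (y - cen Y)) = (size Y)%:R * nsq a + var Y.
Proof.
move=> Hm.
under eq_bigr => y _ do rewrite nsqD.
rewrite !big_split /= sum_const_seq -mulr_sumr -dot_sumr sum_dev // dot0r.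
by rewrite mulr0 addr0.
Qed.

Lemma nsq0 (R : realType) (d : nat) : nsq (0 : 'rV[R]_d) = 0.
Proof. by apply: big1 => i _; rewrite mxE expr0n. Qed.

Fixpoint tup (R : realType) (d : nat) (k : nat) (Y : seq 'rV[R]_d) : seq (seq 'rV[R]_d) :=
  if k is k'.+1 then [seq y :: s | y <- Y, s <- tup k' Y] else [:: [::]].

Definition Ssum (R : realType) (d : nat) (s : seq 'rV[R]_d) : 'rV[R]_d := \sum_(x <- s) x.

Lemma size_tup (R : realType) (d : nat) k (Y : seq 'rV[R]_d) : size (tup k Y) = (size Y ^ k)%N.
Proof. by elim: k => [|k IH] //=; rewrite size_allpairs IH expnS. Qed.

Lemma shift_id (R : realType) (d : nat) (k : nat) (y c : 'rV[R]_d) s :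
  Ssum (y :: s) - k.+1%:R *: c = (Ssum s - k%:R *: c) + (y - c).
Proof.
rewrite /Ssum big_cons; apply/rowP => i; rewrite !mxE mulrSr; ring.
Qed.

Lemma tup_var (R : realType) (d : nat) (k : nat) (Y : seq 'rV[R]_d) :
  (0 < size Y)%N ->
  (size Y)%:R * \sum_(s <- tup k Y) nsq (Ssum s - k%:R *: cen Y)
   = k%:R * (size Y)%:R ^+ k * var Y.
Proof.
move=> Hm; elim: k => [|k IH] /=.
  by rewrite big_cons big_nil /Ssum big_nil scale0r subr0 nsq0 addr0 mulr0 !mul0r.
rewrite big_allpairs_dep /= exchange_big /=.
under eq_bigr => s _ do (under eq_bigr => y _ do rewrite shift_id; rewrite offset //).
rewrite big_split /= -mulr_sumr sum_const_seq size_tup natrX mulrDr IH exprS.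
rewrite mulrSr; ring.
Qed.

Lemma mem_tup (R : realType) (d : nat) (k : nat) (Y P : seq 'rV[R]_d) s :
  {subset Y <= P} -> s \in tup k Y -> s \in tup k P.
Proof.
move=> HYP; elim: k s => [|k IH] s /=; first by [].
case/allpairsP => [[y t] [/= Hy Ht ->]].
by apply/allpairsP; exists (y, t); split => //; [apply: HYP | apply: IH].
Qed.

Lemma uniq_tup (R : realType) (d : nat) (k : nat) (Y : seq 'rV[R]_d) :
  uniq Y -> uniq (tup k Y).
Proof.
move=> HY; elim: k => [|k IH] //=.
apply: allpairs_uniq => //; by move=> [a b] [a' b'] _ _ /= [-> ->].
Qed.

Lemma var_bound (R : realType) (d : nat) (Y : seq 'rV[R]_d) (D2 : R) :
  (0 < size Y)%N -> (forall y y', y \in Y -> y' \in Y -> nsq (y - y') <= D2) ->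
  2 * var Y <= (size Y)%:R * D2.
Proof.
move=> Hm HD.
have Hm0 : 0 < (size Y)%:R :> R by rewrite ltr0n.
have E : \sum_(y' <- Y) \sum_(y <- Y) nsq (y - y') = (size Y)%:R * (2 * var Y).
  have -> : \sum_(y' <- Y) \sum_(y <- Y) nsq (y - y') =
            \sum_(y' <- Y) \sum_(y <- Y) nsq ((cen Y - y') + (y - cen Y)).
    apply: eq_bigr => y' _; apply: eq_bigr => y _; congr nsq.
    by apply/rowP => i; rewrite !mxE; ring.
  under eq_bigr => y' _ do rewrite offset // -opprB nsqN.
  rewrite big_split /= -mulr_sumr sum_const_seq -/(var Y); ring.
have L : \sum_(y' <- Y) \sum_(y <- Y) nsq (y - y') <= (size Y)%:R * ((size Y)%:R * D2).
  rewrite -sum_const_seq; rewrite big_seq_cond [X in _ <= X]big_seq_cond.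
  apply: ler_sum => y' /andP[Hy' _]; rewrite -sum_const_seq big_seq_cond [X in _ <= X]big_seq_cond.
  by apply: ler_sum => y /andP[Hy _]; apply: HD.
rewrite E in L; by rewrite -(ler_pM2l Hm0).
Qed.

Lemma cen_close (R : realType) (d : nat) (Y : seq 'rV[R]_d) (p : 'rV[R]_d) (D2 : R) :
  (0 < size Y)%N -> (forall y, y \in Y -> nsq (y - p) <= D2) ->
  nsq (cen Y - p) <= D2.
Proof.
move=> Hm HD.
have Hm0 : 0 < (size Y)%:R :> R by rewrite ltr0n.
have E : \sum_(y <- Y) nsq (y - p) = (size Y)%:R * nsq (cen Y - p) + var Y.
  rewrite -offset //; apply: eq_bigr => y _; congr nsq.
  by apply/rowP => i; rewrite !mxE; ring.
have L : \sum_(y <- Y) nsq (y - p) <= (size Y)%:R * D2.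
  rewrite -sum_const_seq big_seq_cond [X in _ <= X]big_seq_cond.
  by apply: ler_sum => y /andP[Hy _]; apply: HD.
have V0 : 0 <= var Y by apply: sumr_ge0 => y _; apply: nsq_ge0.
rewrite E in L; rewrite -(ler_pM2l Hm0); lra.
Qed.

Lemma bigmax_ge0 (R : realType) (I : Type) (s : seq I) (F : I -> R) :
  0 <= \big[Num.max/0]_(x <- s) F x.
Proof. elim: s => [|x s IH]; rewrite ?big_nil ?big_cons // le_max IH orbT //. Qed.

Lemma bigmax_ge (R : realType) (I : eqType) (s : seq I) (F : I -> R) x :
  x \in s -> F x <= \big[Num.max/0]_(y <- s) F y.
Proof.
elim: s => [|y s IH] //; rewrite in_cons big_cons le_max => /orP[/eqP->|H].
  by rewrite lexx.
by rewrite IH ?orbT.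
Qed.

Lemma edist_sq (R : realType) (d : nat) (p q : 'rV[R]_d) :
  edist p q ^+ 2 = nsq (p - q).
Proof. by rewrite /edist /enorm sqr_sqrtr //; apply: nsq_ge0. Qed.

Lemma edist_ge0 (R : realType) (d : nat) (p q : 'rV[R]_d) : 0 <= edist p q.
Proof. exact: sqrtr_ge0. Qed.

Lemma diam_ge0 (R : realType) (d : nat) (P : seq 'rV[R]_d) : 0 <= diam P.
Proof. exact: bigmax_ge0. Qed.

Lemma nsq_diam (R : realType) (d : nat) (P : seq 'rV[R]_d) p q :
  p \in P -> q \in P -> nsq (p - q) <= diam P ^+ 2.
Proof.
move=> Hp Hq.
have H : edist p q <= diam P.
  apply: le_trans (bigmax_ge _ Hp); rewrite /=.
  exact: (bigmax_ge (fun q => edist p q) Hq).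
rewrite -edist_sq; have := edist_ge0 p q; nra.
Qed.

Lemma edist_le (R : realType) (d : nat) (p q : 'rV[R]_d) (B : R) :
  0 <= B -> nsq (p - q) <= B ^+ 2 -> edist p q <= B.
Proof.
move=> HB H; rewrite /edist /enorm -(ger0_norm HB) -sqrtr_sqr ler_sqrt //.
exact: sqr_ge0.
Qed.

Definition good (R : realType) (d : nat) (r : nat) (K : R) (Y : seq 'rV[R]_d)
  (s : seq 'rV[R]_d) : bool := nsq (Ssum s - r%:R *: cen Y) <= K.

Definition G (R : realType) (d : nat) (r : nat) (K : R) (Y : seq 'rV[R]_d) :=
  filter (good r K Y) (tup r Y).

Lemma sum_count (R : realType) (I : Type) (p : pred I) (s : seq I) (K : R) :
  \sum_(x <- s) (if p x then 0 else K) = (count (predC p) s)%:R * K.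
Proof.
elim: s => [|x s IH]; first by rewrite big_nil mul0r.
rewrite big_cons IH /=; case: (p x) => /=; rewrite ?add0n ?add0r //.
by rewrite natrD mulrDl mul1r.
Qed.

Lemma good_many (R : realType) (d : nat) (P Y : seq 'rV[R]_d) (r : nat) (K : R) :
  (0 < size Y)%N -> (0 < r)%N -> {subset Y <= P} ->
  K = r%:R * (49 / 16) * diam P ^+ 2 ->
  (size Y)%:R ^+ r <= 2 * (size (G r K Y))%:R :> R.
Proof.
move=> Hm Hr HYP HK.
set m := (size Y)%:R : R.
have Hm0 : 0 < m by rewrite ltr0n.
set T := tup r Y.
set S := \sum_(s <- T) nsq (Ssum s - r%:R *: cen Y).
have HV : 2 * var Y <= m * diam P ^+ 2.
  by apply: var_bound => // y y' Hy Hy'; apply: nsq_diam; apply: HYP.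
have HS : m * S = r%:R * m ^+ r * var Y by apply: tup_var.
have c0 : 0 <= r%:R * m ^+ r :> R by rewrite mulr_ge0 // exprn_ge0 // ltW.
have HS2 : 2 * S <= r%:R * m ^+ r * diam P ^+ 2.
  rewrite -(ler_pM2l Hm0).
  have -> : m * (2 * S) = (r%:R * m ^+ r) * (2 * var Y) by rewrite mulrCA HS; ring.
  apply: le_trans (ler_wpM2l c0 HV) _.
  by rewrite le_eqVlt; apply/orP; left; apply/eqP; ring.
have Hcnt := count_predC (good r K Y) T.
have HN : size T = (size Y ^ r)%N by apply: size_tup.
have HG : size (G r K Y) = count (good r K Y) T by rewrite /G size_filter.
have Hbad : (count (predC (good r K Y)) T)%:R * K <= S.
  rewrite -sum_count /S; apply: ler_sum => s _.
  case E: (good r K Y s); first exact: nsq_ge0.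
  by move: E; rewrite /good => /negbT; rewrite -ltNge => /ltW.
have D0 : 0 <= diam P ^+ 2 by apply: sqr_ge0.
have K0 : 0 <= K by rewrite HK; apply: mulr_ge0 => //; apply: mulr_ge0 => //; lra.
have Hmr : m ^+ r = (size T)%:R by rewrite HN natrX.
rewrite HG Hmr -Hcnt natrD.
case/boolP: (K == 0) => [/eqP KZ | KP].
  have D2 : diam P ^+ 2 = 0.
    have rp : 0 < r%:R :> R by rewrite ltr0n.
    have E : r%:R * (49/16) * diam P ^+ 2 = 0 by rewrite -HK.
    apply/eqP; rewrite eq_le D0 andbT; nra.
  have S0 : S <= 0 by move: HS2; rewrite D2 mulr0; lra.
  have b0 : count (predC (good r K Y)) T = 0%N.
    apply/eqP; rewrite -leqn0 leqNgt -has_count; apply/hasP => [[s Hs Hb]].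
    move: Hb; rewrite /= /good -ltNge => Hb.
    have : nsq (Ssum s - r%:R *: cen Y) <= S.
      rewrite /S (big_rem s Hs) /= lerDl; apply: sumr_ge0 => x _; exact: nsq_ge0.
    lra.
  rewrite b0; have := ler0n R (count (good r K Y) T); lra.
have Kpos : 0 < K by rewrite lt_def KP K0.
rewrite -Hcnt in Hmr.
move: (count (good r K Y) T) (count (predC (good r K Y)) T) Hbad Hmr => g b Hbad Hmr.
have HrD : r%:R * m ^+ r * diam P ^+ 2 = 16 / 49 * K * (g%:R + b%:R).
  by rewrite HK -natrD -Hmr; field.
have H1 : b%:R * K <= (8 / 49 * (g%:R + b%:R)) * K.
  move: HS2; rewrite HrD; lra.
rewrite ler_pM2r // in H1.
have := ler0n R g; lra.
Qed.

Definition qual (R : realType) (d : nat) (P : seq 'rV[R]_d) (eps : R) (Y : seq 'rV[R]_d) : Prop :=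
  [/\ uniq Y, {subset Y <= P} & eps * (size P)%:R <= (size Y)%:R].

Fixpoint valid (R : realType) (d : nat) (P : seq 'rV[R]_d) (eps B : R)
  (L : seq (seq 'rV[R]_d)) : Prop :=
  match L with
  | [::] => True
  | Y :: L' => [/\ qual P eps Y, (forall Y', Y' \in L' -> B < nsq (cen Y' - cen Y))
                 & valid P eps B L']
  end.

Lemma disj (R : realType) (d : nat) (r : nat) (K B D2 : R) (Y Y' s : seq 'rV[R]_d) :
  (0 < r)%N -> K = r%:R * (49 / 16) * D2 -> B = 49 / 4 * D2 / r%:R ->
  good r K Y s -> good r K Y' s -> nsq (cen Y' - cen Y) <= B.
Proof.
move=> Hr HK HB; rewrite /good => H1 H2.
have rp : 0 < r%:R :> R by rewrite ltr0n.
have E : r%:R *: (cen Y' - cen Y) =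
   (Ssum s - r%:R *: cen Y) + - (Ssum s - r%:R *: cen Y').
  by apply/rowP => i; rewrite !mxE; ring.
have H := nsq_par (Ssum s - r%:R *: cen Y) (- (Ssum s - r%:R *: cen Y')).
rewrite -E nsqZ nsqN in H.
rewrite HB ler_pdivlMr //.
have : r%:R ^+ 2 * nsq (cen Y' - cen Y) <= r%:R * (49 / 4 * D2).
  rewrite HK in H1 H2; lra.
set x := nsq _ => Hx; nra.
Qed.

Lemma in_conv_cen (R : realType) (d : nat) (Y : seq 'rV[R]_d) :
  (0 < size Y)%N -> in_conv Y (cen Y).
Proof.
move=> Hm; exists (fun _ => (size Y)%:R^-1); split; first by move=> _; rewrite invr_ge0 ler0n.
split.
  by rewrite sumr_const card_ord -[_ *+ _]mulr_natr mulVf // pnatr_eq0 -lt0n.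
by rewrite /cen (big_nth 0) big_mkord scaler_sumr.
Qed.

Lemma pack_props (R : realType) (d : nat) (P : seq 'rV[R]_d) (eps : R) (r : nat)
  (K B : R) (L : seq (seq 'rV[R]_d)) :
  (0 < eps) -> (0 < r)%N -> (0 < size P)%N ->
  K = r%:R * (49 / 16) * diam P ^+ 2 -> B = 49 / 4 * diam P ^+ 2 / r%:R ->
  valid P eps B L ->
  [/\ uniq (flatten (map (G r K) L)), {subset flatten (map (G r K) L) <= tup r P}
    & (size L)%:R * (eps * (size P)%:R) ^+ r <= 2 * (size (flatten (map (G r K) L)))%:R].
Proof.
move=> e0 Hr Hn HK HB; elim: L => [|Y L IH] /=; first by rewrite mul0r mulr0.
case=> [[HYu HYP HYs] Hfar /IH [U1 U2 U3]].
have en : 0 < eps * (size P)%:R by rewrite mulr_gt0 // ltr0n.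
have Hm : (0 < size Y)%N by rewrite -(ltr0n R); apply: lt_le_trans HYs.
split.
- rewrite cat_uniq U1 andbT filter_uniq ?uniq_tup //=.
  apply/hasPn => s /flatten_mapP [Y' HY' Hs]; apply/negP => Hs'.
  move: Hs Hs'; rewrite !mem_filter => /andP[g1 _] /andP[g2 _].
  have := Hfar Y' HY'; rewrite ltNge => /negP; apply.
  exact: (disj Hr HK HB g2 g1).
- move=> s; rewrite mem_cat; case/orP => Hs; last exact: U2.
  move: Hs; rewrite mem_filter => /andP[_]; exact: mem_tup.
- rewrite size_cat natrD mulrDr -addn1 natrD mulrDl mul1r addrC lerD //.
  apply: le_trans (good_many Hm Hr HYP HK).
  by apply: lerXn2r => //; rewrite ?nnegrE ?ler0n // ltW.
Qed.

Lemma valid_size (R : realType) (d : nat) (P : seq 'rV[R]_d) (eps : R) (r : nat)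
  (B : R) (L : seq (seq 'rV[R]_d)) :
  (0 < eps) -> (0 < r)%N -> (0 < size P)%N -> uniq P ->
  B = 49 / 4 * diam P ^+ 2 / r%:R ->
  valid P eps B L -> (size L)%:R <= 2 / eps ^+ r.
Proof.
move=> e0 Hr Hn HP HB HL.
have [U1 U2 U3] := pack_props e0 Hr Hn (erefl _) HB HL.
have S1 := uniq_leq_size U1 U2.
rewrite size_tup in S1.
have n0 : 0 < (size P)%:R ^+ r :> R by rewrite exprn_gt0 // ltr0n.
have e0r : 0 < eps ^+ r by rewrite exprn_gt0.
rewrite ler_pdivlMr // -(ler_pM2r n0) -mulrA -exprMn.
apply: le_trans U3 _; rewrite -natrX ler_pM2l // ler_nat //.
Qed.

Lemma exists_max (R : realType) (d : nat) (P : seq 'rV[R]_d) (eps B Bd : R) :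
  (forall L, valid P eps B L -> (size L)%:R <= Bd) ->
  exists L, valid P eps B L /\
    forall Y, qual P eps Y -> exists2 Y', Y' \in L & nsq (cen Y' - cen Y) <= B.
Proof.
move=> Hb; apply: NNPP => H.
have grow : forall k, exists L, valid P eps B L /\ size L = k.
  elim=> [|k [L [HL HS]]]; first by exists [::].
  have : ~ (forall Y, qual P eps Y -> exists2 Y', Y' \in L & nsq (cen Y' - cen Y) <= B).
    by move=> Hm; apply: H; exists L.
  move/not_all_ex_not => [Y HY0].
  have [HY HnY] := imply_to_and _ _ HY0.
  exists (Y :: L); split; last by rewrite /= HS.
  split => // Y' HY'; rewrite ltNge; apply/negP => Hle; apply: HnY; by exists Y'.
have Bd0 : 0 <= Num.max Bd 0 by rewrite le_max lexx orbT.
have [L [HL HS]] := grow (Num.Def.archi_bound (Num.max Bd 0)).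
have := Hb L HL; rewrite HS => H1.
have H2 := archi_boundP Bd0.
have H3 : Bd <= Num.max Bd 0 by rewrite le_max lexx.
by have := lt_le_trans H2 (le_trans H1 H3); rewrite ltxx.
Qed.

Theorem theorem7p3 (R : realType) (d : nat) (P : seq 'rV[R]_d) (r : nat) (eps : R) :
  uniq P -> (1 <= r <= size P)%N -> 0 < eps ->
  exists F : seq 'rV[R]_d,
    (size F)%:R <= (r%:R ^+ r) / (eps ^+ r) /\
    forall Y : seq 'rV[R]_d, uniq Y -> {subset Y <= P} ->
      eps * (size P)%:R <= (size Y)%:R ->
      meets_conv F (7 / 2 * diam P / Num.sqrt r%:R) Y.
Proof.
move=> HP /andP[r1 rn] e0.
have Hn : (0 < size P)%N by apply: leq_trans rn.
have n0 : 0 < (size P)%:R :> R by rewrite ltr0n.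
have D0 := diam_ge0 P.
have Ypos : forall Y : seq 'rV[R]_d, eps * (size P)%:R <= (size Y)%:R -> (0 < size Y)%N.
  move=> Y HY; rewrite -(ltr0n R); apply: lt_le_trans HY; exact: mulr_gt0.
have [r1'|r2] := leqP r 1.
  have -> : r = 1%N by apply/eqP; rewrite eqn_leq r1' r1.
  rewrite sqrtr1 divr1 !expr1.
  have [e1|e1] := leP eps 1.
    exists [:: P`_0]; split.
      by rewrite /= ler_pdivlMr // mul1r.
    move=> Y HYu HYP HYs; exists P`_0, (cen Y); split; first exact: mem_head.
    split; first exact: in_conv_cen (Ypos _ HYs).
    have Hp : P`_0 \in P by apply: mem_nth.
    apply: edist_le; first by apply: mulr_ge0 => //; lra.
    rewrite -opprB nsqN.
    have : nsq (cen Y - P`_0) <= diam P ^+ 2.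
      apply: cen_close (Ypos _ HYs) _ => y Hy; exact: nsq_diam (HYP y Hy) Hp.
    move=> H; apply: le_trans H _; nra.
  exists [::]; split; first by rewrite /= divr_ge0 // ltW.
  move=> Y HYu HYP HYs; exfalso.
  have := uniq_leq_size HYu HYP; rewrite -(ler_nat R) => Hs.
  have : eps * (size P)%:R > 1 * (size P)%:R by rewrite ltr_pM2r.
  lra.
have r0 : (0 < r)%N by apply: leq_trans r2.
set B := 49 / 4 * diam P ^+ 2 / r%:R.
have [L [HL Hmax]] := exists_max (fun L => valid_size e0 r0 Hn HP (erefl B)).
exists (map (@cen R d) L); split.
  rewrite size_map; apply: le_trans (valid_size e0 r0 Hn HP (erefl B) HL) _.
  rewrite ler_pM2r ?invr_gt0 ?exprn_gt0 //.
  have : (2 <= r ^ r)%N.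
    apply: leq_trans r2 _; rewrite -{1}(expn1 r) leq_pexp2l //.
  by rewrite -(ler_nat R) natrX.
move=> Y HYu HYP HYs.
have [Y' HY' Hd] := Hmax Y (And3 HYu HYP HYs).
exists (cen Y'), (cen Y); split; first exact: map_f.
split; first exact: in_conv_cen (Ypos _ HYs).
have rp : 0 < r%:R :> R by rewrite ltr0n.
apply: edist_le; first by apply: divr_ge0; [apply: mulr_ge0 => //; lra | apply: sqrtr_ge0].
apply: le_trans Hd _; rewrite /B expr_div_n sqr_sqrtr ?ler0n //.
rewrite le_eqVlt; apply/orP; left; apply/eqP; field.
by rewrite pnatr_eq0 -lt0n.
Qed.
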